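(* Let $A$ be an Archimedean semiprime $f$-algebra and let $A_b=\{a\in A: a^2\le\mu|a| \text{ for some }\mu\in(0,\infty)\}$. Then $A_b$ is simultaneously a subalgebra and an order ideal of $A$.
   Context: An $f$-algebra is a real associative algebra that is a vector lattice with $A_+A_+\subseteq A_+$ and such that $a\wedge b=0$ implies $ac\wedge b=ca\wedge b=0$ for all $c\in A_+$; it is semiprime if $0$ is its only nilpotent element. An order ideal is a solid vector subspace. *)

(* Defs.v *)
From HB Require Import structures.
From mathcomp Require Import all_boot all_order all_algebra.
From mathcomp Require Import reals.
Set Implicit Arguments. Unset Strict Implicit. Unset Printing Implicit Defensive.
Import Order.TTheory GRing.Theory Num.Theory.
Local Open Scope ring_scope.

Record falgebra (R : realType) (V : lmodType R) := FAlgebra {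
  fle : V -> V -> Prop;
  fjoin : V -> V -> V;
  fmeet : V -> V -> V;
  fmul : V -> V -> V;
  fle_refl : forall x, fle x x;
  fle_anti : forall x y, fle x y -> fle y x -> x = y;
  fle_trans : forall x y z, fle x y -> fle y z -> fle x z;
  fle_add : forall x y z, fle x y -> fle (x + z) (y + z);
  fle_scale : forall (c : R) x y, 0 <= c -> fle x y -> fle (c *: x) (c *: y);
  fjoin_ubl : forall x y, fle x (fjoin x y);
  fjoin_ubr : forall x y, fle y (fjoin x y);
  fjoin_lub : forall x y z, fle x z -> fle y z -> fle (fjoin x y) z;
  fmeet_lbl : forall x y, fle (fmeet x y) x;
  fmeet_lbr : forall x y, fle (fmeet x y) y;
  fmeet_glb : forall x y z, fle z x -> fle z y -> fle z (fmeet x y);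
  fmulA : forall x y z, fmul x (fmul y z) = fmul (fmul x y) z;
  fmulDl : forall x y z, fmul (x + y) z = fmul x z + fmul y z;
  fmulDr : forall x y z, fmul x (y + z) = fmul x y + fmul x z;
  fmulZl : forall (c : R) x y, fmul (c *: x) y = c *: fmul x y;
  fmulZr : forall (c : R) x y, fmul x (c *: y) = c *: fmul x y;
  fmul_ge0 : forall x y, fle 0 x -> fle 0 y -> fle 0 (fmul x y);
  fmeet0 : forall a b c, fmeet a b = 0 -> fle 0 c ->
     fmeet (fmul a c) b = 0 /\ fmeet (fmul c a) b = 0
}.

Section FAlgDefs.
Variables (R : realType) (V : lmodType R) (A : falgebra V).

Definition fabs (x : V) : V := fjoin A x (- x).

Definition archimedean_fa : Prop :=
  forall x y : V, fle A 0 x -> (forall n : nat, fle A (x *+ n) y) -> x = 0.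

(* fpow x n = x^(n+1) *)
Fixpoint fpow (x : V) (n : nat) : V :=
  match n with O => x | S k => fmul A x (fpow x k) end.

Definition nilpotent_fa (x : V) : Prop := exists n : nat, fpow x n = 0.

Definition semiprime_fa : Prop := forall x : V, nilpotent_fa x -> x = 0.

Definition vsubspace (S : V -> Prop) : Prop :=
  S 0 /\ (forall x y, S x -> S y -> S (x + y)) /\
  (forall (c : R) x, S x -> S (c *: x)).

Definition subalgebra_fa (S : V -> Prop) : Prop :=
  vsubspace S /\ (forall x y, S x -> S y -> S (fmul A x y)).

Definition order_ideal_fa (S : V -> Prop) : Prop :=
  vsubspace S /\ (forall x y, S y -> fle A (fabs x) (fabs y) -> S x).

Definition Ab (a : V) : Prop :=
  exists mu : R, 0 < mu /\ fle A (fmul A a a) (mu *: fabs a).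

End FAlgDefs.

(* Main.v *)
Require Import Defs.
From mathcomp Require Import all_boot all_order all_algebra.
From mathcomp Require Import reals.
Set Implicit Arguments. Unset Strict Implicit. Unset Printing Implicit Defensive.
Import Order.TTheory GRing.Theory Num.Theory.
Local Open Scope ring_scope.

Section Aux.
Variables (R : realType) (V : lmodType R) (A : falgebra V).
Local Notation le := (fle A).
Local Notation mul := (fmul A).
Local Notation jn := (fjoin A).
Local Notation mt := (fmeet A).

Lemma le_antiE x y : le x y -> le y x -> x = y.
Proof. exact: fle_anti. Qed.

Lemma leD2 x y u v : le x y -> le u v -> le (x + u) (y + v).
Proof.
move=> h1 h2; apply: (fle_trans (fle_add u h1)).
rewrite ![y + _]addrC; exact: fle_add.
Qed.

Lemma subge0 x y : le x y <-> le 0 (y - x).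
Proof.
split=> h.
  by rewrite -(subrr x); apply: fle_add.
by have := fle_add x h; rewrite add0r subrK.
Qed.

Lemma ge0D x y : le 0 x -> le 0 y -> le 0 (x + y).
Proof. by move=> h1 h2; rewrite -(addr0 0); apply: leD2. Qed.

Lemma leN x y : le x y -> le (- y) (- x).
Proof. by move/subge0=> h; apply/subge0; rewrite opprK addrC. Qed.

Lemma le0N x : le x 0 -> le 0 (- x).
Proof. by move/leN; rewrite oppr0. Qed.

Lemma leZ0 (c : R) x : 0 <= c -> le 0 x -> le 0 (c *: x).
Proof. by move=> hc hx; rewrite -(scaler0 _ c); apply: fle_scale. Qed.

Lemma ge0_half x : le 0 (x + x) -> le 0 x.
Proof.
move=> h; have := leZ0 (c := 2^-1) _ h.
by rewrite -mulr2n -scaler_nat scalerA mulVf ?pnatr_eq0 // scale1r; apply; rewrite invr_ge0.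
Qed.

Lemma mul0l y : mul 0 y = 0.
Proof. by have := fmulZl A 0 0 y; rewrite !scale0r. Qed.
Lemma mul0r y : mul y 0 = 0.
Proof. by have := fmulZr A 0 y 0; rewrite !scale0r. Qed.
Lemma mulNl x y : mul (- x) y = - mul x y.
Proof. by rewrite -scaleN1r fmulZl scaleN1r. Qed.
Lemma mulNr x y : mul x (- y) = - mul x y.
Proof. by rewrite -scaleN1r fmulZr scaleN1r. Qed.
Lemma mulBl x y z : mul (x - y) z = mul x z - mul y z.
Proof. by rewrite fmulDl mulNl. Qed.
Lemma mulBr x y z : mul z (x - y) = mul z x - mul z y.
Proof. by rewrite fmulDr mulNr. Qed.

Lemma mul_lel a x y : le 0 a -> le x y -> le (mul a x) (mul a y).
Proof. by move=> ha /subge0 h; apply/subge0; rewrite -mulBr; apply: fmul_ge0. Qed.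
Lemma mul_ler a x y : le 0 a -> le x y -> le (mul x a) (mul y a).
Proof. by move=> ha /subge0 h; apply/subge0; rewrite -mulBl; apply: fmul_ge0. Qed.

Lemma joinC x y : jn x y = jn y x.
Proof. by apply: le_antiE; apply: fjoin_lub; first [exact: fjoin_ubl | exact: fjoin_ubr]. Qed.
Lemma meetC x y : mt x y = mt y x.
Proof. by apply: le_antiE; apply: fmeet_glb; first [exact: fmeet_lbl | exact: fmeet_lbr]. Qed.
Lemma meet_id0 x : mt x x = 0 -> x = 0.
Proof.
move=> h; rewrite -h; apply: le_antiE; last exact: fmeet_lbl.
by apply: fmeet_glb; apply: fle_refl.
Qed.
Lemma joinD u v w : jn (u + w) (v + w) = jn u v + w.
Proof.
apply: le_antiE.
  by apply: fjoin_lub; apply: fle_add; first [exact: fjoin_ubl | exact: fjoin_ubr].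
have h : le (jn u v) (jn (u + w) (v + w) - w).
  apply: fjoin_lub.
    by have := fle_add (-w) (fjoin_ubl A (u + w) (v + w)); rewrite addrK.
  by have := fle_add (-w) (fjoin_ubr A (u + w) (v + w)); rewrite addrK.
by have := fle_add w h; rewrite subrK.
Qed.
Lemma joinZ (c : R) u v : 0 < c -> jn (c *: u) (c *: v) = c *: jn u v.
Proof.
move=> hc; have hci : 0 <= c^-1 by rewrite invr_ge0 ltW.
have e (w : V) : w = c *: (c^-1 *: w) by rewrite scalerA divff ?gt_eqF // scale1r.
apply: le_antiE.
  by apply: fjoin_lub; apply: fle_scale; first [exact: (ltW hc) | exact: fjoin_ubl | exact: fjoin_ubr].
rewrite [jn (c *: u) _]e; apply: fle_scale; first exact: (ltW hc).
have e' (w : V) : w = c^-1 *: (c *: w) by rewrite scalerA mulVf ?gt_eqF // scale1r.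
apply: fjoin_lub.
  by rewrite {1}(e' u); apply: fle_scale => //; apply: fjoin_ubl.
by rewrite {1}(e' v); apply: fle_scale => //; apply: fjoin_ubr.
Qed.


Local Notation abs := (fabs A).
Definition pos z := jn z 0.
Definition neg z := jn (- z) 0.

Lemma pos_eq z : pos z = neg z + z.
Proof. by rewrite /pos /neg -joinD addNr add0r joinC. Qed.
Lemma z_eq z : z = pos z - neg z.
Proof. by rewrite pos_eq (addrC (neg z)) addrK. Qed.
Lemma pos_ge0 z : le 0 (pos z). Proof. exact: fjoin_ubr. Qed.
Lemma neg_ge0 z : le 0 (neg z). Proof. exact: fjoin_ubr. Qed.
Lemma abs_eq z : pos z + neg z = abs z.
Proof.
have -> : pos z + neg z = (pos z + pos z) - z by rewrite [neg z](_ : _ = pos z - z) ?addrA // pos_eq addrK.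
rewrite -mulr2n -scaler_nat /pos -joinZ ?ltr0n // scaler0 scaler_nat mulr2n.
by rewrite -joinD addrK sub0r.
Qed.
Lemma abs_ge0 z : le 0 (abs z).
Proof. by rewrite -abs_eq; apply: ge0D; [apply: pos_ge0 | apply: neg_ge0]. Qed.
Lemma le_abs z : le z (abs z). Proof. exact: fjoin_ubl. Qed.
Lemma le_absN z : le (- z) (abs z). Proof. exact: fjoin_ubr. Qed.

Lemma posneg0 z : mt (pos z) (neg z) = 0.
Proof.
set m := mt (pos z) (neg z).
have m0 : le 0 m by apply: fmeet_glb; [apply: pos_ge0 | apply: neg_ge0].
apply: le_antiE => //.
have J : le (abs z) (jn (pos z) (neg z)).
  apply: fjoin_lub.
    apply: fle_trans (fjoin_ubl A _ _); exact: fjoin_ubl.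
  apply: fle_trans (fjoin_ubr A _ _); exact: fjoin_ubl.
have K : le (jn (pos z) (neg z)) (pos z + neg z - m).
  apply: fjoin_lub.
    rewrite -addrA; rewrite -{1}(addr0 (pos z)); apply: leD2; first exact: fle_refl.
    by move: (fmeet_lbr A (pos z) (neg z)) => /subge0.
  rewrite (addrC (pos z)) -addrA; rewrite -{1}(addr0 (neg z)); apply: leD2; first exact: fle_refl.
  by move: (fmeet_lbl A (pos z) (neg z)) => /subge0.
have := fle_trans J K; rewrite abs_eq => /subge0.
rewrite addrC addKr => /leN; rewrite opprK oppr0 //.
Qed.

Lemma disj0 p q : mt p q = 0 -> mul p q = 0.
Proof.
move=> h.
have hp : le 0 p by have := fmeet_lbl A p q; rewrite h.
have hq : le 0 q by have := fmeet_lbr A p q; rewrite h.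
have [h1 _] := fmeet0 h hq.
rewrite meetC in h1.
have [_ h2] := fmeet0 h1 hp.
exact: meet_id0.
Qed.

Lemma sq z : mul z z = mul (abs z) (abs z).
Proof.
have h1 := disj0 (posneg0 z).
have h2 : mul (neg z) (pos z) = 0 by apply: disj0; rewrite meetC posneg0.
rewrite -abs_eq {1 2}(z_eq z).
move: (pos z) (neg z) h1 h2 => p n h1 h2.
rewrite !mulBl !mulBr !fmulDl !fmulDr h1 h2.
by rewrite subr0 sub0r opprK addr0 add0r.
Qed.

Lemma core (hsp : semiprime_fa A) a c nu : 0 <= nu -> le 0 a -> le 0 c ->
  le (mul c c) (nu *: c) -> le (mul a c) (nu *: a).
Proof.
move=> hnu ha hc hcc.
set z := mul a c - nu *: a.
have hzc : le (mul z c) 0.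
  have -> : mul z c = mul a (mul c c - nu *: c).
    by rewrite /z mulBl mulBr fmulZl fmulZr fmulA.
  rewrite -(mul0r a); apply: mul_lel => //.
  by have := fle_add (- (nu *: c)) hcc; rewrite subrr.
set d := pos z; set nz := neg z.
have hd0 : le 0 d by apply: pos_ge0.
have hdc : mul d c = 0.
  have e : mul z c = mul d c - mul nz c by rewrite {1}(z_eq z) mulBl.
  have hle : le (mul d c) (mul nz c).
    by have := fle_add (mul nz c) hzc; rewrite e subrK add0r.
  have hdisj : mt (mul nz c) (mul d c) = 0.
    have [h1 _] := fmeet0 (posneg0 z) hc.
    rewrite meetC in h1.
    by have [h2 _] := fmeet0 h1 hc.
  apply: le_antiE; last exact: fmul_ge0.
  have : le (mul d c) (mt (mul nz c) (mul d c)) by apply: fmeet_glb => //; apply: fle_refl.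
  by rewrite hdisj.
have he : mt d c = 0.
  set e := mt d c.
  have he0 : le 0 e by apply: fmeet_glb.
  have hee : mul e e = 0.
    apply: le_antiE; last exact: fmul_ge0.
    rewrite -hdc; apply: fle_trans (_ : le _ (mul e c)) _.
      by apply: mul_lel => //; apply: fmeet_lbr.
    by apply: mul_ler => //; apply: fmeet_lbl.
  by apply: hsp; exists 1%N.
have hdac : mt (mul a c) d = 0.
  rewrite meetC in he.
  by have [_ h] := fmeet0 he ha.
have hdle : le d (mul a c).
  apply: fjoin_lub; last exact: fmul_ge0.
  by apply/subge0; rewrite /z opprB addrC subrK; apply: leZ0.
have d0 : d = 0.
  apply: le_antiE => //.
  have : le d (mt (mul a c) d) by apply: fmeet_glb => //; apply: fle_refl.
  by rewrite hdac.
apply/subge0.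
have -> : nu *: a - mul a c = nz by rewrite -opprB -/z {1}(z_eq z) -/d d0 sub0r opprK.
exact: neg_ge0.
Qed.


Lemma sol (hsp : semiprime_fa A) b K x : 0 <= K -> le 0 b ->
  le (mul b b) (K *: b) -> le (abs x) b -> le (mul x x) (K *: abs x).
Proof.
move=> hK hb hbb hx; rewrite sq.
apply: fle_trans (_ : le _ (mul (abs x) b)) _.
  by apply: mul_lel => //; apply: abs_ge0.
by apply: core => //; apply: abs_ge0.
Qed.

Lemma AbE x : Ab A x -> exists mu, 0 < mu /\ le (mul (abs x) (abs x)) (mu *: abs x).
Proof. by case=> mu [hmu h]; exists mu; rewrite -sq. Qed.

Lemma abs_tri x y : le (abs (x + y)) (abs x + abs y).
Proof.
apply: fjoin_lub; first by apply: leD2; apply: le_abs.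
by rewrite opprD; apply: leD2; apply: le_absN.
Qed.

Lemma Ab0 : Ab A 0.
Proof.
exists 1; split => //; rewrite mul0l scale1r; exact: abs_ge0.
Qed.

Lemma AbD (hsp : semiprime_fa A) x y : Ab A x -> Ab A y -> Ab A (x + y).
Proof.
move=> /AbE [mu [hmu hx]] /AbE [nu [hnu hy]].
exists (mu + nu); split; first exact: addr_gt0.
have ha := abs_ge0 x; have hc := abs_ge0 y.
apply: (sol hsp (b := abs x + abs y)); first by rewrite addr_ge0 // ltW.
- exact: ge0D.
- rewrite fmulDl !fmulDr scalerDr !scalerDl.
  apply: leD2; apply: leD2 => //.
  + by apply: core => //; apply: ltW.
  + by apply: core => //; apply: ltW.
- exact: abs_tri.
Qed.

Lemma AbN x : Ab A x -> Ab A (- x).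
Proof.
case=> mu [hmu h]; exists mu; split => //.
rewrite mulNl mulNr opprK /fabs opprK joinC; exact: h.
Qed.

Lemma AbZ (hsp : semiprime_fa A) (c : R) x : Ab A x -> Ab A (c *: x).
Proof.
have [->|cn0] := eqVneq c 0; first by rewrite scale0r => _; apply: Ab0.
move=> /AbE [mu [hmu hx]].
have hc : 0 < `|c| by rewrite normr_gt0.
exists (`|c| * mu); split; first exact: mulr_gt0.
apply: (sol hsp (b := `|c| *: abs x)).
- by rewrite mulr_ge0 // ltW.
- by apply: leZ0 => //; apply: abs_ge0.
- rewrite fmulZl fmulZr -scalerA; apply: fle_scale; first exact: ltW.
  rewrite scalerA mulrC -scalerA; apply: fle_scale; first exact: ltW.
  exact: hx.
- apply: fjoin_lub.
  + have [c0|c0] := leP 0 c.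
      by rewrite ger0_norm //; apply: fle_scale => //; apply: le_abs.
    have -> : c *: x = (- c) *: (- x) by rewrite scaleNr scalerN opprK.
    rewrite ltr0_norm //; apply: fle_scale; first by rewrite oppr_ge0 ltW.
    exact: le_absN.
  + have [c0|c0] := leP 0 c.
      by rewrite ger0_norm // -scalerN; apply: fle_scale => //; apply: le_absN.
    rewrite ltr0_norm // -scaleNr; apply: fle_scale; first by rewrite oppr_ge0 ltW.
    exact: le_abs.
Qed.

Lemma zid (G : zmodType) (a b c d : G) :
  (a + b - (c + d)) + (a - b + (c - d)) = (a - d) + (a - d).
Proof.
rewrite opprD (addrACA (a + b)) (addrACA a b) subrr addr0 (addrACA (-c)) addNr add0r.
by rewrite addrACA.
Qed.
Lemma zid2 (G : zmodType) (a b c d : G) :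
  (a - b - (c - d)) + (a + b + (c + d)) = (a - - d) + (a - - d).
Proof.
rewrite opprB opprK (addrC c d) (addrACA (a - b)) (addrACA a) addNr addr0.
by rewrite (addrACA d) addNr addr0 addrACA.
Qed.

Lemma abs_mul x y : le (abs (mul x y)) (mul (abs x) (abs y)).
Proof.
have h1 : le 0 (abs x - x) by move/subge0: (le_abs x).
have h2 : le 0 (abs x + x) by move/subge0: (le_absN x); rewrite opprK.
have h3 : le 0 (abs y - y) by move/subge0: (le_abs y).
have h4 : le 0 (abs y + y) by move/subge0: (le_absN y); rewrite opprK.
apply: fjoin_lub; apply/subge0; apply: ge0_half.
  rewrite -(zid _ (mul (abs x) y) (mul x (abs y))) -!fmulDr -!mulBr -mulBl -fmulDl.
  by apply: ge0D; apply: fmul_ge0.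
rewrite -(zid2 _ (mul (abs x) y) (mul x (abs y))) -!fmulDr -!mulBr -mulBl -fmulDl.
by apply: ge0D; apply: fmul_ge0.
Qed.

Lemma AbM (hsp : semiprime_fa A) x y : Ab A x -> Ab A y -> Ab A (mul x y).
Proof.
move=> /AbE [mu [hmu hx]] /AbE [nu [hnu hy]].
have ha := abs_ge0 x; have hc := abs_ge0 y.
exists (mu * nu); split; first exact: mulr_gt0.
apply: (sol hsp (b := mul (abs x) (abs y))).
- by rewrite mulr_ge0 // ltW.
- exact: fmul_ge0.
- rewrite -fmulA (fmulA A (abs y)).
  rewrite -scalerA -!fmulZr; apply: mul_lel => //.
  apply: fle_trans (_ : le _ (mul (mu *: abs y) (abs y))) _.
    by apply: mul_ler => //; apply: core => //; apply: ltW.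
  by rewrite fmulZl; apply: fle_scale => //; apply: ltW.
- exact: abs_mul.
Qed.

Lemma abs_monoN x : abs (- x) = abs x.
Proof. by rewrite /fabs opprK joinC. Qed.

Lemma Ab_solid (hsp : semiprime_fa A) x y : Ab A y -> le (abs x) (abs y) -> Ab A x.
Proof.
move=> /AbE [mu [hmu hy]] hxy; exists mu; split => //.
apply: (sol hsp (b := abs y)) => //; [exact: ltW | exact: abs_ge0].
Qed.

End Aux.

Theorem theorem6 (R : realType) (V : lmodType R) (A : falgebra V) :
  archimedean_fa A -> semiprime_fa A ->
  subalgebra_fa A (Ab A) /\ order_ideal_fa A (Ab A).
Proof.
move=> _ hsp.
have vs : vsubspace (Ab A).
  split; first exact: Ab0.
  split; [exact: AbD | exact: AbZ].
split; split => //.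
- exact: AbM.
- by move=> x y hy hxy; apply: Ab_solid hxy.
Qed.
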